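(* If $f(z)=z+\sum_{n\ge2}a_nz^n$ belongs to $\mathcal{H}_{\sigma}$, then $|a_2a_4-a_3^2|\le\frac{3}{2}$.
   Context: $\mathbb{U}=\{z\in\mathbb{C}:|z|<1\}$. $\sigma$ denotes the class of analytic functions $f(z)=z+\sum_{n\ge2}a_nz^n$ on $\mathbb{U}$ that are univalent in $\mathbb{U}$ and whose inverse $g=f^{-1}$ is also univalent in $\mathbb{U}$. $\mathcal{H}_{\sigma}$ is the set of $f\in\sigma$ with $\operatorname{Re} f'(z)>0$ for $z\in\mathbb{U}$ and $\operatorname{Re} g'(w)>0$ for $w\in\mathbb{U}$, where $g=f^{-1}$ (equivalently, $f'(z)\prec\frac{1+z}{1-z}$ and $g'(w)\prec\frac{1+w}{1-w}$). *)

(* Defs.v *)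
From Stdlib Require Import Reals.
From Coquelicot Require Import Coquelicot.
Open Scope R_scope.

Definition in_U (z : C) : Prop := Cmod z < 1.

Definition holomorphic_on_U (f : C -> C) : Prop :=
  forall z, in_U z -> ex_derive (K := C_AbsRing) (V := C_NormedModule) f z.

Definition univalent_on_U (f : C -> C) : Prop :=
  holomorphic_on_U f /\
  (forall z1 z2, in_U z1 -> in_U z2 -> f z1 = f z2 -> z1 = z2).

(* f(z) = z + sum_{n>=2} a_n z^n on U, encoded by coefficients a with
   a 0 = 0, a 1 = 1 and the power series converging to f z on U. *)
Definition normalized_series (a : nat -> C) (f : C -> C) : Prop :=
  a 0%nat = 0%C /\ a 1%nat = 1%C /\
  forall z, in_U z -> is_series (V := C_NormedModule) (fun n => (a n * z ^ n)%C) (f z).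

(* g is (the analytic continuation to U of) the inverse of f:
   near 0 it is the inverse of f (with values in U). *)
Definition inverse_near_0 (f g : C -> C) : Prop :=
  exists r, 0 < r /\ forall w, Cmod w < r -> in_U (g w) /\ f (g w) = w.

Definition in_sigma (a : nat -> C) (f : C -> C) : Prop :=
  normalized_series a f /\ univalent_on_U f /\
  exists g, inverse_near_0 f g /\ univalent_on_U g.

Definition Re_deriv_pos_on_U (h : C -> C) : Prop :=
  forall z, in_U z -> exists l : C,
    is_derive (K := C_AbsRing) (V := C_NormedModule) h z l /\ 0 < Re l.

Definition in_H_sigma (a : nat -> C) (f : C -> C) : Prop :=
  normalized_series a f /\ univalent_on_U f /\ Re_deriv_pos_on_U f /\
  exists g, inverse_near_0 f g /\ univalent_on_U g /\ Re_deriv_pos_on_U g.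

(* Main.v *)
Require Import Defs.
From Stdlib Require Import Reals Lra Lia Psatz.
From Coquelicot Require Import Coquelicot.
Open Scope R_scope.


Lemma sum_re (u : nat -> C) N : sum_n (fun n => Re (u n)) N = Re (sum_n u N).
Proof.
  induction N.
  - rewrite !sum_O. reflexivity.
  - rewrite !sum_Sn, IHN. reflexivity.
Qed.
Lemma sum_im (u : nat -> C) N : sum_n (fun n => Im (u n)) N = Im (sum_n u N).
Proof.
  induction N.
  - rewrite !sum_O. reflexivity.
  - rewrite !sum_Sn, IHN. reflexivity.
Qed.

Lemma re_series (u : nat -> C) l : is_series (V:=C_NormedModule) u l ->
  is_series (fun n => Re (u n)) (Re l).
Proof.
  unfold is_series. intros H. apply filterlim_locally. intros eps.
  pose proof (proj1 (filterlim_locally (F:=eventually) (sum_n u) l) H eps) as H'.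
  eapply filter_imp; [|exact H']. intros N [H1 H2]. rewrite sum_re. exact H1.
Qed.
Lemma im_series (u : nat -> C) l : is_series (V:=C_NormedModule) u l ->
  is_series (fun n => Im (u n)) (Im l).
Proof.
  unfold is_series. intros H. apply filterlim_locally. intros eps.
  pose proof (proj1 (filterlim_locally (F:=eventually) (sum_n u) l) H eps) as H'.
  eapply filter_imp; [|exact H']. intros N [H1 H2]. rewrite sum_im. exact H2.
Qed.


Lemma term_small (u : nat -> C) l : is_series (V:=C_NormedModule) u l ->
  exists K, forall m, (K <= m)%nat -> Cmod (u m) <= 1.
Proof.
  intros H.
  assert (HR := ex_series_lim_0 _ (ex_intro _ _ (re_series u l H))).
  assert (HI := ex_series_lim_0 _ (ex_intro _ _ (im_series u l H))).
  apply is_lim_seq_spec in HR. apply is_lim_seq_spec in HI.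
  assert (h2: 0 < /2) by lra.
  destruct (HR (mkposreal _ h2)) as [N1 H1].
  destruct (HI (mkposreal _ h2)) as [N2 H2].
  exists (N1 + N2)%nat. intros m Hm.
  specialize (H1 m ltac:(lia)). specialize (H2 m ltac:(lia)). simpl in H1, H2.
  rewrite Rminus_0_r in H1, H2.
  eapply Rle_trans. apply Cmod_2Rmax.
  assert (Hs: 0 <= sqrt 2) by apply sqrt_pos.
  assert (Hs2: sqrt 2 * sqrt 2 = 2) by (apply sqrt_sqrt; lra).
  assert (Rmax (Rabs (fst (u m))) (Rabs (snd (u m))) <= /2).
  { apply Rmax_lub; unfold Re, Im in *; lra. }
  assert (0 <= Rmax (Rabs (fst (u m))) (Rabs (snd (u m)))).
  { eapply Rle_trans. apply Rabs_pos. apply Rmax_l. }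
  nra.
Qed.

Lemma abs_conv (a : nat -> C) (F : C -> C) :
  (forall z, in_U z -> is_series (V:=C_NormedModule) (fun n => (a n * z ^ n)%C) (F z)) ->
  forall r, 0 <= r < 1 -> ex_series (fun m => Cmod (a m) * r ^ m).
Proof.
  intros HF r Hr.
  set (rho := (r + 1) / 2).
  assert (Hrho : in_U (RtoC rho)).
  { unfold in_U. rewrite Cmod_R, Rabs_pos_eq; unfold rho; lra. }
  destruct (term_small _ _ (HF _ Hrho)) as [K HK].
  apply (ex_series_incr_n _ K).
  set (q := r / rho).
  assert (Hq : 0 <= q < 1).
  { unfold q, rho. split. apply Rdiv_le_0_compat; lra.
    apply (Rmult_lt_reg_r ((r+1)/2)); [lra|]. unfold Rdiv at 1.
    rewrite Rmult_assoc, Rinv_l; lra. }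
  apply (ex_series_le (K:=R_AbsRing) (V:=R_CompleteNormedModule) _ (fun k => q ^ K * q ^ k)).
  - intros k. cbv beta. rewrite <- pow_add.
    specialize (HK (K + k)%nat ltac:(lia)).
    rewrite Cmod_mult, Cmod_pow, Cmod_R, Rabs_pos_eq in HK by (unfold rho; lra).
    change (norm (Cmod (a (K + k)%nat) * r ^ (K + k))) with
      (Rabs (Cmod (a (K + k)%nat) * r ^ (K + k))).
    assert (0 <= Cmod (a (K+k)%nat)) by apply Cmod_ge_0.
    assert (0 <= r ^ (K+k)) by (apply pow_le; lra).
    rewrite Rabs_pos_eq by nra.
    assert (Hr' : r = q * rho) by (unfold q, rho; field; lra).
    rewrite Hr', Rpow_mult_distr.
    assert (0 <= q ^ (K+k)) by (apply pow_le; lra).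
    nra.
  - apply (ex_series_scal (K:=R_AbsRing) (V:=R_NormedModule) (q ^ K) (fun k => q ^ k)). apply ex_series_geom. rewrite Rabs_pos_eq; lra.
Qed.


Lemma Re_lin (a b l : C) (h : R) : Re (a - b - RtoC h * l)%C = Re a - Re b - h * Re l.
Proof. destruct a, b, l; unfold Re; simpl; ring. Qed.

Lemma path_deriv (f : C -> C) (z w : C) (t0 : R) (l : C) : z <> w ->
  is_derive (K:=C_AbsRing) (V:=C_NormedModule) f (w + RtoC t0 * (z - w))%C l ->
  is_derive (fun t => Re (f (w + RtoC t * (z - w))%C / (z - w))%C) t0 (Re l).
Proof.
  intros Hzw H.
  apply is_derive_Reals. intros eps Heps.
  destruct H as [_ Hd].
  set (z0 := (w + RtoC t0 * (z - w))%C) in *.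
  assert (Hl: is_filter_lim (T:=AbsRing_UniformSpace C_AbsRing) (@locally (AbsRing_UniformSpace C_AbsRing) z0) z0) by (intros P HP; exact HP).
  assert (He2 : 0 < eps / 2) by lra.
  specialize (Hd z0 Hl (mkposreal _ He2)).
  destruct Hd as [d0 Hd0].
  assert (Hzw' : (z - w)%C <> 0%C).
  { intros E. apply Hzw. replace z with ((z - w) + w)%C by ring. rewrite E. ring. }
  set (D := Cmod (z - w)%C).
  assert (HD : 0 < D) by (apply Cmod_gt_0; exact Hzw').
  assert (Hdd : 0 < d0 / (D + 1)).
  { apply Rdiv_lt_0_compat. apply cond_pos. lra. }
  exists (mkposreal _ Hdd). intros h hne hlt. simpl in hlt.
  set (y := (w + RtoC (t0 + h) * (z - w))%C).
  assert (Hyz : (y - z0)%C = (RtoC h * (z - w))%C).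
  { unfold y, z0. rewrite RtoC_plus. ring. }
  assert (Hb : Cmod (y - z0)%C < d0).
  { rewrite Hyz, Cmod_mult, Cmod_R. fold D.
    assert (Rabs h * (D + 1) < d0).
    { apply (Rmult_lt_reg_r (/ (D+1))). apply Rinv_0_lt_compat; lra.
      rewrite Rmult_assoc, Rinv_r by lra. lra. }
    assert (0 <= Rabs h) by apply Rabs_pos. nra. }
  specialize (Hd0 y Hb). simpl in Hd0.
  change (Cmod (f y - f z0 - (y - z0) * l)%C <= eps / 2 * Cmod (y - z0)%C) in Hd0.
  set (E := (f y - f z0 - (y - z0) * l)%C) in *.
  rewrite Hyz, Cmod_mult, Cmod_R in Hd0. fold D in Hd0.
  assert (HQ : ((f y / (z - w)) - (f z0 / (z - w)) - RtoC h * l = E / (z - w))%C).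
  { unfold E. rewrite Hyz. field. exact Hzw'. }
  replace ((Re (f y / (z - w))%C - Re (f z0 / (z - w))%C) / h - Re l)
    with (Re (E / (z - w))%C / h).
  2:{ rewrite <- HQ, Re_lin. field. exact hne. }
  unfold Rdiv. rewrite Rabs_mult, Rabs_inv.
  assert (HR := re_le_Cmod (E / (z - w))%C).
  rewrite Cmod_div in HR by exact Hzw'. fold D in HR.
  assert (Hh : 0 < Rabs h) by (apply Rabs_pos_lt; exact hne).
  assert (Rabs (Re (E / (z - w))%C) <= eps / 2 * Rabs h).
  { eapply Rle_trans. exact HR. unfold Rdiv.
    apply (Rmult_le_reg_r D); [lra|]. rewrite Rmult_assoc, Rinv_l by lra. nra. }
  apply (Rmult_lt_reg_r (Rabs h)); [lra|].
  rewrite Rmult_assoc, Rinv_l by lra. nra.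
Qed.

Lemma segment_in_U (z w : C) (t : R) : in_U z -> in_U w -> 0 <= t <= 1 ->
  in_U (w + RtoC t * (z - w))%C.
Proof.
  unfold in_U. intros Hz Hw Ht.
  replace (w + RtoC t * (z - w))%C with (RtoC (1 - t) * w + RtoC t * z)%C
    by (rewrite RtoC_minus; ring).
  eapply Rle_lt_trans. apply Cmod_triangle.
  rewrite !Cmod_mult, !Cmod_R, !Rabs_pos_eq by lra.
  destruct (Rle_lt_or_eq_dec 0 t (proj1 Ht)) as [Ht0|Ht0].
  - assert (0 < t * (1 - Cmod z)) by (apply Rmult_lt_0_compat; lra).
    assert (0 <= (1 - t) * (1 - Cmod w)) by (apply Rmult_le_pos; lra).
    lra.
  - subst t. lra.
Qed.

Lemma Re_minus (a b : C) : Re (a - b)%C = Re a - Re b.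
Proof. destruct a, b; unfold Re; simpl; ring. Qed.

Lemma diffquot_pos (f : C -> C) : Re_deriv_pos_on_U f ->
  forall z w, in_U z -> in_U w -> z <> w -> 0 < Re ((f z - f w) / (z - w))%C.
Proof.
  intros Hf z w Hz Hw Hzw.
  set (phi := fun t => Re (f (w + RtoC t * (z - w))%C / (z - w))%C).
  assert (Hd : forall t, 0 <= t <= 1 -> exists l, is_derive phi t l /\ 0 < l).
  { intros t Ht. destruct (Hf _ (segment_in_U z w t Hz Hw Ht)) as [l [Hl Hlp]].
    exists (Re l). split; [|exact Hlp]. apply path_deriv; assumption. }
  assert (Hex : forall t, 0 <= t <= 1 -> ex_derive phi t).
  { intros t Ht. destruct (Hd t Ht) as [l [Hl _]]. exists l. exact Hl. }
  destruct (MVT_gen phi 0 1 (Derive phi)) as [c [Hc Heq]].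
  - intros x Hx. rewrite Rmin_left, Rmax_right in Hx by lra.
    apply Derive_correct. apply Hex. lra.
  - intros x Hx. rewrite Rmin_left, Rmax_right in Hx by lra.
    apply derivable_continuous_pt. apply ex_derive_Reals_0. apply Hex. lra.
  - rewrite Rmin_left, Rmax_right in Hc by lra.
    destruct (Hd c Hc) as [l [Hl Hlp]].
    rewrite (is_derive_unique _ _ _ Hl) in Heq.
    assert (E1 : phi 1 = Re (f z / (z - w))%C).
    { unfold phi. f_equal. f_equal. f_equal. ring. }
    assert (E0 : phi 0 = Re (f w / (z - w))%C).
    { unfold phi. f_equal. f_equal. f_equal. ring. }
    replace ((f z - f w) / (z - w))%C with (f z / (z - w) - f w / (z - w))%C.
    2:{ unfold Cdiv. ring. }
    rewrite Re_minus, <- E1, <- E0, Heq. nra.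
Qed.


Definition cis (t : R) : C := (cos t, sin t).

Lemma cis_mult a b : (cis a * cis b)%C = cis (a + b).
Proof.
  unfold cis, Cmult; simpl. rewrite cos_plus, sin_plus.
  apply injective_projections; simpl; ring.
Qed.

Lemma cis_pow a k : (cis a ^ k)%C = cis (INR k * a).
Proof.
  induction k.
  - simpl. unfold cis. rewrite Rmult_0_l, cos_0, sin_0. reflexivity.
  - rewrite Cpow_S, IHk, cis_mult. f_equal. rewrite S_INR. ring.
Qed.

Lemma Cmod_cis a : Cmod (cis a) = 1.
Proof.
  assert (H := sin2_cos2 a). unfold Rsqr in H. unfold Cmod, cis, fst, snd.
  replace (cos a ^ 2 + sin a ^ 2) with 1 by nra. apply sqrt_1.
Qed.

Lemma cis_conj_mult a : (cis a * Cconj (cis a))%C = 1.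
Proof.
  unfold cis, Cconj, Cmult; simpl.
  apply injective_projections; simpl.
  - assert (H := sin2_cos2 a). unfold Rsqr in H. nra.
  - ring.
Qed.

Lemma cis_ne1 t : 0 < t < 2 * PI -> cis t <> 1%C.
Proof.
  intros Ht E. unfold cis in E. injection E as Ec Es.
  destruct (Rlt_le_dec t PI) as [H1|H1].
  - assert (0 < sin t) by (apply sin_gt_0; lra). lra.
  - destruct (Req_dec t PI) as [H2|H2].
    + subst t. rewrite cos_PI in Ec. lra.
    + assert (sin t < 0) by (apply sin_lt_0; lra). lra.
Qed.

Fixpoint csum (F : nat -> C) (N : nat) : C :=
  match N with O => 0%C | S N => (csum F N + F N)%C end.
Fixpoint rsum (F : nat -> R) (N : nat) : R :=
  match N with O => 0 | S N => rsum F N + F N end.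

Lemma csum_ext F G N : (forall k, (k < N)%nat -> F k = G k) -> csum F N = csum G N.
Proof. induction N; intros H; simpl; auto. rewrite IHN, H; auto. Qed.
Lemma rsum_ext F G N : (forall k, (k < N)%nat -> F k = G k) -> rsum F N = rsum G N.
Proof. induction N; intros H; simpl; auto. rewrite IHN, H; auto. Qed.
Lemma csum_plus F G N : csum (fun k => F k + G k)%C N = (csum F N + csum G N)%C.
Proof. induction N; simpl. ring. rewrite IHN. ring. Qed.
Lemma csum_scal c F N : csum (fun k => c * F k)%C N = (c * csum F N)%C.
Proof. induction N; simpl. ring. rewrite IHN. ring. Qed.
Lemma csum_conj F N : csum (fun k => Cconj (F k)) N = Cconj (csum F N).
Proof. induction N; simpl. apply injective_projections; simpl; ring.
  rewrite IHN, Cplus_conj. reflexivity. Qed.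
Lemma csum_re F N : rsum (fun k => Re (F k)) N = Re (csum F N).
Proof. induction N; simpl. reflexivity. rewrite IHN. reflexivity. Qed.
Lemma csum_const N : csum (fun _ => 1%C) N = RtoC (INR N).
Proof. induction N. reflexivity. cbn [csum]. rewrite IHN, S_INR, RtoC_plus. reflexivity. Qed.
Lemma rsum_le F G N : (forall k, (k < N)%nat -> F k <= G k) -> rsum F N <= rsum G N.
Proof. induction N; intros H; simpl. lra. assert (F N <= G N) by auto.
  assert (rsum F N <= rsum G N) by auto. lra. Qed.
Lemma rsum_const c N : rsum (fun _ => c) N = INR N * c.
Proof. induction N. simpl; ring. cbn [rsum]. rewrite IHN, S_INR. ring. Qed.
Lemma rsum_scal c F N : rsum (fun k => c * F k) N = c * rsum F N.
Proof. induction N; simpl. ring. rewrite IHN. ring. Qed.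

Lemma geom_csum (x : C) N : ((x - 1) * csum (fun k => x ^ k) N = x ^ N - 1)%C.
Proof. induction N; simpl. ring.
  rewrite Cmult_plus_distr_l, IHN. ring. Qed.

Definition omega (N : nat) : C := cis (2 * PI / INR N).

Lemma omega_N N : (0 < N)%nat -> (omega N ^ N)%C = 1%C.
Proof.
  intros H. unfold omega. rewrite cis_pow.
  replace (INR N * (2 * PI / INR N)) with (2 * PI).
  - unfold cis. rewrite cos_2PI, sin_2PI. reflexivity.
  - field. apply not_0_INR. lia.
Qed.

Lemma root_sum N j : (0 < j < N)%nat -> csum (fun k => (omega N ^ j) ^ k)%C N = 0%C.
Proof.
  intros Hj.
  assert (Hne : (omega N ^ j)%C <> 1%C).
  { unfold omega. rewrite cis_pow. apply cis_ne1.
    assert (HN : 0 < INR N) by (apply lt_0_INR; lia).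
    assert (Hjr : 0 < INR j) by (apply lt_0_INR; lia).
    assert (HjN : INR j < INR N) by (apply lt_INR; lia).
    assert (HPI := PI_RGT_0).
    split.
    - apply Rmult_lt_0_compat; [lra|]. apply Rdiv_lt_0_compat; lra.
    - replace (INR j * (2 * PI / INR N)) with ((2 * PI) * (INR j / INR N)) by (field; lra).
      assert (INR j / INR N < 1).
      { apply (Rmult_lt_reg_r (INR N)); [lra|]. unfold Rdiv.
        rewrite Rmult_assoc, Rinv_l by lra. lra. }
      nra. }
  assert (Hg := geom_csum (omega N ^ j)%C N).
  rewrite <- Cpow_mult_r, Nat.mul_comm, Cpow_mult_r, omega_N in Hg by lia.
  rewrite Cpow_1_l in Hg.
  assert (Hx : (omega N ^ j - 1)%C <> 0%C) by (apply Cminus_eq_contra; exact Hne).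
  transitivity (/ (omega N ^ j - 1) * ((omega N ^ j - 1) * csum (fun k => (omega N ^ j) ^ k) N))%C.
  - field. exact Hx.
  - rewrite Hg. ring.
Qed.


Lemma Re_mult_real (A : C) (w : R) : Re A * w = Re (A * RtoC w)%C.
Proof. destruct A; unfold Re, RtoC, Cmult; simpl. ring. Qed.

Lemma RtoC_Re (y : C) : RtoC (Re y) = ((y + Cconj y) / 2)%C.
Proof. destruct y as [y1 y2]. unfold Re, RtoC, Cconj, Cdiv, Cplus, Cinv, Cmult; simpl.
  apply injective_projections; simpl; field. Qed.

Lemma unit_pow_conj (u : C) m n : (u * Cconj u = 1)%C ->
  (u ^ m * Cconj (u ^ n))%C = if (n <=? m)%nat then (u ^ (m - n))%C else Cconj (u ^ (n - m)).
Proof.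
  intros Hu.
  assert (Hp : forall k, (u ^ k * Cconj (u ^ k))%C = 1%C).
  { intros k. rewrite Cpow_conj, <- Cpow_mult_l, Hu. apply Cpow_1_l. }
  destruct (Nat.leb_spec n m).
  - replace m with ((m - n) + n)%nat at 1 by lia. rewrite Cpow_add_r.
    rewrite <- Cmult_assoc, Hp. ring.
  - replace n with ((n - m) + m)%nat at 1 by lia. rewrite Cpow_add_r, Cmult_conj.
    transitivity (Cconj (u ^ (n - m)) * (u ^ m * Cconj (u ^ m)))%C. ring.
    rewrite Hp. ring.
Qed.

Lemma omega_unit N : (omega N * Cconj (omega N) = 1)%C.
Proof. apply cis_conj_mult. Qed.

Lemma omega_k_unit N k : ((omega N ^ k) * Cconj (omega N ^ k) = 1)%C.
Proof. rewrite Cpow_conj, <- Cpow_mult_l, omega_unit. apply Cpow_1_l. Qed.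

Definition psum N j := csum (fun k => (omega N ^ k) ^ j)%C N.

Lemma psum_swap N j : psum N j = csum (fun k => (omega N ^ j) ^ k)%C N.
Proof. unfold psum. apply csum_ext. intros k _. rewrite <- !Cpow_mult_r, Nat.mul_comm. reflexivity. Qed.

Lemma psum_0 N : psum N 0 = RtoC (INR N).
Proof. unfold psum. rewrite <- csum_const. apply csum_ext. reflexivity. Qed.

Lemma psum_small N j : (0 < j < N)%nat -> psum N j = 0%C.
Proof. intros H. rewrite psum_swap. apply root_sum. exact H. Qed.

Lemma is_series_zero : is_series (fun _ : nat => 0) 0.
Proof.
  unfold is_series. apply (filterlim_ext (fun _ => 0)).
  - intros N. induction N. rewrite sum_O. reflexivity. rewrite sum_Sn, <- IHN.
    unfold plus; simpl. ring.
  - apply filterlim_const.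
Qed.

Lemma is_series_rsum (F : nat -> nat -> R) (v : nat -> R) K :
  (forall k, (k < K)%nat -> is_series (F k) (v k)) ->
  is_series (fun m => rsum (fun k => F k m) K) (rsum v K).
Proof.
  induction K; intros H.
  - simpl. apply is_series_zero.
  - simpl. apply (is_series_plus (fun m => rsum (fun k => F k m) K) (F K)).
    apply IHK; auto. apply H. lia.
Qed.

Lemma is_series_le_R (a b : nat -> R) la lb : is_series a la -> is_series b lb ->
  (forall k, a k <= b k) -> la <= lb.
Proof.
  intros Ha Hb H.
  assert (Hl := is_lim_seq_le (sum_n a) (sum_n b) la lb).
  simpl in Hl. apply Hl; auto.
  intros N. rewrite !sum_n_Reals. apply sum_Rle. intros; auto.
Qed.


Lemma Rabs_le_inv (a b : R) : Rabs a <= b -> - b <= a <= b.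
Proof. unfold Rabs. destruct (Rcase_abs a); intros; lra. Qed.

Lemma Cmod_omega N : Cmod (omega N) = 1.
Proof. apply Cmod_cis. Qed.

Lemma T3_eq N m n : csum (fun k => ((omega N ^ k) ^ m * Cconj ((omega N ^ k) ^ n))%C) N =
  if (n <=? m)%nat then psum N (m - n) else Cconj (psum N (n - m)).
Proof.
  destruct (Nat.leb_spec n m).
  - unfold psum. apply csum_ext. intros k _. rewrite unit_pow_conj by apply omega_k_unit.
    destruct (Nat.leb_spec n m); [reflexivity | lia].
  - unfold psum. rewrite <- csum_conj. apply csum_ext. intros k _.
    rewrite unit_pow_conj by apply omega_k_unit.
    destruct (Nat.leb_spec n m); [lia | reflexivity].
Qed.

Lemma Re_bound_weight (c X : C) : Cmod c = 1 -> Cmod X = 1 -> 0 <= 1 + Re (c * X)%C <= 2.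
Proof.
  intros Hc HX. assert (H := re_le_Cmod (c * X)%C).
  rewrite Cmod_mult, Hc, HX in H. apply Rabs_le_inv in H. lra.
Qed.

Section Carath.
Variable d : nat -> C.
Variable n : nat.
Variable r : R.
Hypothesis Hn : (1 <= n)%nat.
Hypothesis Hr : 0 < r < 1.
Hypothesis Hd0 : d 0%nat = 1%C.
Hypothesis Hpos : forall z, 0 < Cmod z < 1 -> exists v,
  is_series (V:=C_NormedModule) (fun m => (d m * z ^ m)%C) v /\ 0 <= Re v.
Variable N : nat.
Hypothesis HN : (2 * n < N)%nat.
Variable c : C.
Hypothesis Hc : Cmod c = 1.

Let w k := 1 + Re (c * (omega N ^ k) ^ n)%C.
Let zk k := (RtoC r * omega N ^ k)%C.
Let F k m := Re (d m * (zk k) ^ m)%C * w k.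
Let t m := rsum (fun k => F k m) N.

Lemma w_bound k : 0 <= w k <= 2.
Proof. apply Re_bound_weight. exact Hc. rewrite Cmod_pow, Cmod_pow, Cmod_omega.
  rewrite !pow1. reflexivity. Qed.

Lemma Cmod_zk k : Cmod (zk k) = r.
Proof. unfold zk. rewrite Cmod_mult, Cmod_R, Cmod_pow, Cmod_omega, pow1, Rabs_pos_eq; lra. Qed.

Lemma t_series : exists S, is_series t S /\ 0 <= S.
Proof.
  unfold t. generalize N. intros K. induction K.
  - exists 0. split. simpl. apply is_series_zero. lra.
  - destruct IHK as [S [HS HS0]].
    destruct (Hpos (zk K)) as [v [Hv Hv0]]. rewrite Cmod_zk. lra.
    exists (S + w K * Re v). split.
    + assert (HF : is_series (fun m => F K m) (w K * Re v)).
      { apply (is_series_ext (fun m => scal (w K) (Re (d m * zk K ^ m)%C))).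
        intros m. unfold F, scal; simpl. unfold mult; simpl. ring.
        exact (is_series_scal (w K) _ _ (re_series _ _ Hv)). }
      exact (is_series_plus _ _ _ _ HS HF).
    + assert (H := w_bound K). nra.
Qed.

Lemma t_bound m : Rabs (t m) <= 2 * INR N * (Cmod (d m) * r ^ m).
Proof.
  assert (HF : forall k, Rabs (F k m) <= 2 * (Cmod (d m) * r ^ m)).
  { intros k. unfold F. rewrite Rabs_mult. assert (Hw := w_bound k).
    rewrite (Rabs_pos_eq (w k)) by lra.
    assert (H := re_le_Cmod (d m * zk k ^ m)%C).
    rewrite Cmod_mult, Cmod_pow, Cmod_zk in H.
    assert (0 <= Rabs (Re (d m * zk k ^ m)%C)) by apply Rabs_pos. nra. }
  apply Rabs_le. unfold t. split.
  - replace (- (2 * INR N * (Cmod (d m) * r ^ m))) with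
      (rsum (fun _ => - (2 * (Cmod (d m) * r ^ m))) N) by (rewrite rsum_const; ring).
    apply rsum_le. intros k _. specialize (HF k). apply Rabs_le_inv in HF. lra.
  - replace (2 * INR N * (Cmod (d m) * r ^ m)) with
      (rsum (fun _ => (2 * (Cmod (d m) * r ^ m))) N) by (rewrite rsum_const; ring).
    apply rsum_le. intros k _. specialize (HF k). apply Rabs_le_inv in HF. lra.
Qed.

Lemma t_formula m : t m = Re (d m * RtoC (r ^ m) *
  (psum N m + c / 2 * psum N (m + n) + Cconj c / 2 *
    csum (fun k => ((omega N ^ k) ^ m * Cconj ((omega N ^ k) ^ n))%C) N))%C.
Proof.
  unfold t, F.
  rewrite (rsum_ext _ (fun k => Re (d m * zk k ^ m * RtoC (w k))%C)).
  2:{ intros k _. apply Re_mult_real. }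
  rewrite csum_re. f_equal.
  rewrite (csum_ext _ (fun k => (d m * RtoC (r ^ m)) * (
    ((omega N ^ k) ^ m) + c / 2 * ((omega N ^ k) ^ (m + n)) +
    Cconj c / 2 * ((omega N ^ k) ^ m * Cconj ((omega N ^ k) ^ n))))%C).
  2:{ intros k _. unfold w, zk. rewrite RtoC_plus, RtoC_Re, Cpow_mult_l, RtoC_pow, Cpow_add_r, Cmult_conj.
      field. }
  rewrite csum_scal, !csum_plus, !csum_scal. unfold psum. reflexivity.
Qed.

Lemma Cconj_0 : Cconj 0%C = 0%C.
Proof. apply injective_projections; simpl; ring. Qed.

Lemma t_0 : t 0 = INR N.
Proof.
  rewrite t_formula, T3_eq. destruct (Nat.leb_spec n 0); [lia|].
  rewrite psum_0, (psum_small N (0 + n)), (psum_small N (n - 0)) by lia.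
  rewrite Cconj_0, Hd0. simpl pow.
  replace (1 * RtoC 1 * (RtoC (INR N) + c / 2 * 0 + Cconj c / 2 * 0))%C with (RtoC (INR N)) by ring.
  reflexivity.
Qed.

Lemma t_n (Hcd : (Cconj c * d n)%C = (- RtoC (Cmod (d n)))%C) :
  t n = - (INR N / 2) * (Cmod (d n) * r ^ n).
Proof.
  rewrite t_formula, T3_eq. destruct (Nat.leb_spec n n); [|lia].
  rewrite Nat.sub_diag, psum_0, (psum_small N n), (psum_small N (n + n)) by lia.
  replace (d n * RtoC (r ^ n) * (0 + c / 2 * 0 + Cconj c / 2 * RtoC (INR N)))%C
    with ((Cconj c * d n) * RtoC (r ^ n) * RtoC (INR N) / 2)%C by (field).
  rewrite Hcd. unfold Re, RtoC, Cmult, Cdiv, Cinv, Copp; simpl. field.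
Qed.

Lemma t_zero m : (0 < m < N - n)%nat -> m <> n -> t m = 0.
Proof.
  intros Hm Hmn. rewrite t_formula, T3_eq.
  rewrite (psum_small N m), (psum_small N (m + n)) by lia.
  destruct (Nat.leb_spec n m).
  - rewrite (psum_small N (m - n)) by lia.
    transitivity (Re 0%C). f_equal. ring. reflexivity.
  - rewrite (psum_small N (n - m)) by lia. rewrite Cconj_0.
    transitivity (Re 0%C). f_equal. ring. reflexivity.
Qed.

Lemma t_partial j : (j < N - n)%nat -> sum_n t j = t 0 + (if (n <=? j)%nat then t n else 0).
Proof.
  induction j; intros Hj.
  - rewrite sum_O. destruct (Nat.leb_spec n 0); [lia|]. simpl. rewrite Rplus_0_r. reflexivity.
  - rewrite sum_Sn, IHj by lia. unfold plus; simpl.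
    destruct (Nat.eq_dec (S j) n) as [E|E].
    + destruct (Nat.leb_spec n j); [lia|]. destruct (Nat.leb_spec n (S j)); [|lia].
      rewrite E. ring.
    + rewrite (t_zero (S j)) by lia.
      destruct (Nat.leb_spec n j); destruct (Nat.leb_spec n (S j)); try lia; ring.
Qed.

Lemma final_ineq (Hcd : (Cconj c * d n)%C = (- RtoC (Cmod (d n)))%C) L :
  is_series (fun m => Cmod (d m) * r ^ m) L ->
  0 <= INR N - INR N / 2 * (Cmod (d n) * r ^ n) +
       2 * INR N * (L - sum_n (fun m => Cmod (d m) * r ^ m) (pred (N - n))).
Proof.
  intros HL.
  destruct t_series as [S [HS HS0]].
  set (M := (N - n)%nat).
  assert (HM : (0 < M)%nat) by (unfold M; lia).
  assert (Ht : is_series (fun k => t (M + k)%nat) (S - sum_n t (pred M))).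
  { apply is_series_incr_n; auto. match goal with |- is_series _ ?x => replace x with S end.
    exact HS. unfold plus; simpl. change (@eq R S (S - sum_n t (pred M) + sum_n t (pred M))). unfold Rminus. rewrite Rplus_assoc, Rplus_opp_l, Rplus_0_r. reflexivity. }
  set (g := fun m => Cmod (d m) * r ^ m).
  assert (Hg : is_series (fun k => g (M + k)%nat) (L - sum_n g (pred M))).
  { apply is_series_incr_n; auto. match goal with |- is_series _ ?x => replace x with L end.
    exact HL. unfold plus; simpl. change (@eq R L (L - sum_n g (pred M) + sum_n g (pred M))). unfold Rminus. rewrite Rplus_assoc, Rplus_opp_l, Rplus_0_r. reflexivity. }
  assert (Hg2 : is_series (fun k => 2 * INR N * g (M + k)%nat) (2 * INR N * (L - sum_n g (pred M)))).
  { exact (is_series_scal (2 * INR N) _ _ Hg). }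
  assert (Hle := is_series_le_R _ _ _ _ Ht Hg2).
  assert (Hle' : S - sum_n t (pred M) <= 2 * INR N * (L - sum_n g (pred M))).
  { apply Hle. intros k. assert (H := t_bound (M + k)). apply Rabs_le_inv in H. unfold g. lra. }
  rewrite t_partial in Hle' by (unfold M; lia).
  destruct (Nat.leb_spec n (pred M)); [|unfold M in *; lia].
  rewrite t_0, t_n in Hle' by exact Hcd.
  fold M g. lra.
Qed.
End Carath.

Lemma RtoC_neq0 (x : R) : x <> 0 -> RtoC x <> 0%C.
Proof. intros H E. apply H. injection E. auto. Qed.

Lemma Cconj_RtoC (x : R) : Cconj (RtoC x) = RtoC x.
Proof. apply injective_projections; simpl; ring. Qed.

Theorem carath (d : nat -> C) (n : nat) (r : R) :
  (1 <= n)%nat -> 0 < r < 1 -> d 0%nat = 1%C ->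
  (forall z, 0 < Cmod z < 1 -> exists v,
    is_series (V:=C_NormedModule) (fun m => (d m * z ^ m)%C) v /\ 0 <= Re v) ->
  ex_series (fun m => Cmod (d m) * r ^ m) ->
  Cmod (d n) * r ^ n <= 2.
Proof.
  intros Hn Hr Hd0 Hpos [L HL].
  destruct (Ceq_dec (d n) 0%C) as [Hz|Hnz].
  { rewrite Hz, Cmod_0. lra. }
  set (m := Cmod (d n)).
  assert (Hm : 0 < m) by (apply Cmod_gt_0; exact Hnz).
  set (X := m * r ^ n).
  apply Rnot_lt_le. intros HX.
  assert (He : 0 < (X - 2) / 8) by lra.
  pose proof (proj1 (filterlim_locally (F:=eventually) (sum_n (fun m => Cmod (d m) * r ^ m)) L) HL (mkposreal _ He)) as [N0 HN0].
  set (N := (N0 + 2 * n + 2)%nat).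
  set (c := (- d n / RtoC m)%C).
  assert (Hm0 : RtoC m <> 0%C) by (apply RtoC_neq0; lra).
  assert (Hc : Cmod c = 1).
  { unfold c. rewrite Cmod_div, Cmod_opp, Cmod_R, Rabs_pos_eq by (first [exact Hm0 | lra]). fold m. field. lra. }
  assert (Hcd : (Cconj c * d n)%C = (- RtoC (Cmod (d n)))%C).
  { unfold c. rewrite Cdiv_conj, Copp_conj, Cconj_RtoC by exact Hm0.
    transitivity (- (d n * Cconj (d n)) / RtoC m)%C.
    - field. exact Hm0.
    - rewrite <- Cmod2_conj. fold m. rewrite RtoC_pow. field. exact Hm0. }
  assert (HN : (2 * n < N)%nat) by (unfold N; lia).
  assert (Hfin := final_ineq d n r Hn Hr Hd0 Hpos N HN c Hc Hcd L HL).
  specialize (HN0 (pred (N - n)) ltac:(unfold N; lia)).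
  change (Rabs (sum_n (fun m => Cmod (d m) * r ^ m) (pred (N - n)) - L) < (X - 2) / 8) in HN0.
  apply Rlt_le, Rabs_le_inv in HN0.
  fold m X in Hfin.
  assert (HNr : 0 < INR N) by (apply lt_0_INR; unfold N; lia).
  set (s := sum_n (fun m => Cmod (d m) * r ^ m) (pred (N - n))) in *.
  nra.
Qed.


Section Final.
Variable a : nat -> C.
Variable f : C -> C.
Hypothesis Ha0 : a 0%nat = 0%C.
Hypothesis Ha1 : a 1%nat = 1%C.
Hypothesis Hser : forall z, in_U z -> is_series (V:=C_NormedModule) (fun n => (a n * z ^ n)%C) (f z).
Hypothesis Hpos : Re_deriv_pos_on_U f.
Variable s : R.
Hypothesis Hs : 0 < s < 1.

Let q m := (1 - s ^ (S m)) / (1 - s).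
Let ds m := (a (S m) * RtoC (q m))%C.

Lemma ds0 : ds 0%nat = 1%C.
Proof. unfold ds, q. rewrite Ha1. simpl. replace ((1 - s * 1) / (1 - s)) with 1 by (field; lra).
  apply injective_projections; simpl; ring. Qed.

Lemma ds_pos : forall z, 0 < Cmod z < 1 -> exists v,
    is_series (V:=C_NormedModule) (fun m => (ds m * z ^ m)%C) v /\ 0 <= Re v.
Proof.
  intros z Hz.
  assert (HzU : in_U z) by (unfold in_U; lra).
  assert (HszU : in_U (RtoC s * z)%C).
  { unfold in_U. rewrite Cmod_mult, Cmod_R, Rabs_pos_eq by lra. nra. }
  assert (Hz0 : z <> 0%C) by (apply Cmod_gt_0; lra).
  assert (Hs1 : (1 - RtoC s)%C <> 0%C).
  { rewrite <- RtoC_minus. apply RtoC_neq0. lra. }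
  assert (Hzs' : (z - RtoC s * z)%C <> 0%C).
  { replace (z - RtoC s * z)%C with ((1 - RtoC s) * z)%C by ring.
    apply Cmult_neq_0; assumption. }
  assert (Hzs : z <> (RtoC s * z)%C).
  { intros E. apply Hzs'. rewrite <- E. ring. }
  exists ((f z - f (RtoC s * z)) / (z - RtoC s * z))%C. split.
  2:{ apply Rlt_le. apply diffquot_pos; assumption. }
  pose proof (is_series_minus _ _ _ _ (Hser z HzU) (Hser _ HszU)) as Hm.
  assert (H1 : is_series (V:=C_NormedModule) (fun k => (a (S k) * z ^ (S k) - a (S k) * (RtoC s * z) ^ (S k))%C) (f z - f (RtoC s * z))%C).
  { apply (is_series_incr_1 (fun n => (a n * z ^ n - a n * (RtoC s * z) ^ n)%C)).
    match goal with |- is_series _ ?x => match type of Hm with is_series _ ?l => replace x with l end end.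
    exact Hm. rewrite Ha0. unfold plus, opp; simpl. change (@eq C (f z + - f (RtoC s * z))%C (f z - f (RtoC s * z) + (0 * 1 - (0 * 1)))%C). ring. }
  assert (H2 := is_series_scal (/ (z - RtoC s * z))%C _ _ H1).
  match goal with |- is_series _ ?x => replace x with (scal (/ (z - RtoC s * z))%C (f z - f (RtoC s * z))%C) end.
  2:{ unfold scal; simpl. unfold mult; simpl. change (@eq C (/ (z - RtoC s * z) * (f z - f (RtoC s * z)))%C ((f z - f (RtoC s * z)) / (z - RtoC s * z))%C).
      unfold Cdiv. ring. }
  refine (is_series_ext _ _ _ _ H2).
  intros k. symmetry. unfold ds, q. unfold scal; simpl. unfold mult; simpl.
  change (@eq C (a (S k) * RtoC ((1 - s ^ S k) / (1 - s)) * z ^ k)%C (/ (z - RtoC s * z) * (a (S k) * z ^ S k - a (S k) * (RtoC s * z) ^ S k))%C).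
  rewrite Cpow_mult_l, RtoC_div, RtoC_minus, RtoC_pow by lra.
  rewrite (Cpow_S z k).
  generalize (RtoC s ^ S k)%C. intros P.
  rewrite RtoC_minus. field. repeat split; assumption.
Qed.

Lemma spow_bound k : 0 <= s ^ k <= 1.
Proof. induction k; simpl; nra. Qed.

Lemma q_bound m : 0 <= q m <= / (1 - s).
Proof.
  unfold q. assert (H := spow_bound (S m)). unfold Rdiv. split.
  - apply Rmult_le_pos; [lra|]. apply Rlt_le, Rinv_0_lt_compat. lra.
  - assert (0 < / (1 - s)) by (apply Rinv_0_lt_compat; lra). nra.
Qed.

Lemma ds_abs r : 0 < r < 1 -> ex_series (fun m => Cmod (ds m) * r ^ m).
Proof.
  intros Hr.
  assert (H := abs_conv a f Hser r ltac:(lra)).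
  apply ex_series_incr_1 in H.
  apply (ex_series_le (K:=R_AbsRing) (V:=R_CompleteNormedModule) _
    (fun k => / (r * (1 - s)) * (Cmod (a (S k)) * r ^ S k))).
  - intros k. cbv beta. change (norm (Cmod (ds k) * r ^ k)) with (Rabs (Cmod (ds k) * r ^ k)).
    unfold ds. rewrite Cmod_mult, Cmod_R.
    assert (Hq := q_bound k). rewrite (Rabs_pos_eq (q k)) by lra.
    assert (0 <= Cmod (a (S k))) by apply Cmod_ge_0.
    assert (0 < r ^ k) by (apply pow_lt; lra).
    rewrite Rabs_pos_eq by (apply Rmult_le_pos; [apply Rmult_le_pos|]; lra).
    replace (/ (r * (1 - s)) * (Cmod (a (S k)) * r ^ S k)) with
      (Cmod (a (S k)) * / (1 - s) * r ^ k) by (simpl; field; lra).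
    apply Rmult_le_compat_r; [lra|]. apply Rmult_le_compat_l; lra.
  - apply (ex_series_scal (K:=R_AbsRing) (V:=R_NormedModule) (/ (r * (1 - s))) (fun k => Cmod (a (S k)) * r ^ S k)).
    exact H.
Qed.

Lemma coef_bound n : (1 <= n)%nat -> Cmod (a (S n)) * q n * s ^ n <= 2.
Proof.
  intros Hn.
  assert (H := carath ds n s Hn Hs ds0 ds_pos (ds_abs s Hs)).
  unfold ds in H. rewrite Cmod_mult, Cmod_R, Rabs_pos_eq in H by (apply q_bound).
  exact H.
Qed.
End Final.

Lemma limit_arg (x k C : R) : 0 <= x -> 0 < k -> 0 < C ->
  (forall t, 0 < t < 1 -> x * (k - C * t) <= 2) -> x * k <= 2.
Proof.
  intros Hx Hk HC H. apply Rnot_lt_le. intros Hlt.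
  set (t := (x * k - 2) / (2 * x * C + x * k)).
  assert (Hx0 : 0 < x) by (destruct (Req_dec x 0); [subst; lra | lra]).
  assert (Hden : 0 < 2 * x * C + x * k) by nra.
  assert (Ht0 : 0 < t) by (apply Rdiv_lt_0_compat; lra).
  assert (Ht1 : t < 1).
  { unfold t. apply (Rmult_lt_reg_r (2 * x * C + x * k)); [lra|].
    unfold Rdiv. rewrite Rmult_assoc, Rinv_l by lra. nra. }
  specialize (H t (conj Ht0 Ht1)).
  assert (Hct : x * C * t * (2 * x * C + x * k) = x * C * (x * k - 2)).
  { unfold t. field. lra. }
  assert (x * C * t < (x * k - 2) / 2).
  { apply (Rmult_lt_reg_r (2 * x * C + x * k)); [lra|]. rewrite Hct. nra. }
  nra.
Qed.


Lemma bernoulli_s (s : R) k : 0 <= s <= 1 -> s ^ k >= 1 - INR k * (1 - s).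
Proof.
  intros Hs. induction k.
  - simpl. lra.
  - rewrite S_INR. simpl pow. assert (0 <= s ^ k) by (apply pow_le; lra).
    assert (0 <= INR k) by apply pos_INR.
    assert (s * s ^ k >= s * (1 - INR k * (1 - s))) by (apply Rle_ge, Rmult_le_compat_l; lra).
    assert (0 <= INR k * ((1 - s) * (1 - s))) by (apply Rmult_le_pos; nra). nra.
Qed.

Lemma coef_final (a : nat -> C) (f : C -> C) n (P : R -> R) (k Cc : R) :
  a 0%nat = 0%C -> a 1%nat = 1%C ->
  (forall z, in_U z -> is_series (V:=C_NormedModule) (fun n => (a n * z ^ n)%C) (f z)) ->
  Re_deriv_pos_on_U f -> (1 <= n)%nat -> 0 < k -> 0 < Cc ->
  (forall s, 0 < s < 1 -> (1 - s ^ S n) / (1 - s) * s ^ n >= k - Cc * (1 - s)) ->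
  Cmod (a (S n)) * k <= 2.
Proof.
  intros Ha0 Ha1 Hser Hpos Hn Hk HC HP.
  apply (limit_arg _ _ Cc); auto. apply Cmod_ge_0.
  intros t Ht.
  assert (Hs : 0 < 1 - t < 1) by lra.
  assert (H := coef_bound a f Ha0 Ha1 Hser Hpos (1 - t) Hs n Hn).
  specialize (HP (1 - t) Hs). replace (1 - (1 - t)) with t in HP by ring.
  assert (0 <= Cmod (a (S n))) by apply Cmod_ge_0.
  rewrite Rmult_assoc in H. replace (1 - (1 - t)) with t in H by ring.
  eapply Rle_trans; [|exact H]. apply Rmult_le_compat_l; lra.
Qed.

Theorem corollary4p6 (a : nat -> C) (f : C -> C) :
  in_H_sigma a f ->
  Cmod (a 2%nat * a 4%nat - a 3%nat * a 3%nat)%C <= 3 / 2.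
Proof.
  intros [[Ha0 [Ha1 Hser]] [_ [Hpos _]]].
  assert (H2 : Cmod (a 2%nat) * 2 <= 2).
  { apply (coef_final a f 1 (fun _ => 0) 2 3); auto; try lra.
    intros s Hs. replace ((1 - s ^ 2) / (1 - s) * s ^ 1) with (s ^ 1 + s ^ 2) by (field; lra).
    assert (B1 := bernoulli_s s 1 ltac:(lra)). assert (B2 := bernoulli_s s 2 ltac:(lra)).
    simpl INR in B1, B2. lra. }
  assert (H3 : Cmod (a 3%nat) * 3 <= 2).
  { apply (coef_final a f 2 (fun _ => 0) 3 9); auto; try lra.
    intros s Hs. replace ((1 - s ^ 3) / (1 - s) * s ^ 2) with (s ^ 2 + s ^ 3 + s ^ 4) by (field; lra).
    assert (B2 := bernoulli_s s 2 ltac:(lra)). assert (B3 := bernoulli_s s 3 ltac:(lra)).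
    assert (B4 := bernoulli_s s 4 ltac:(lra)).
    simpl INR in B2, B3, B4. lra. }
  assert (H4 : Cmod (a 4%nat) * 4 <= 2).
  { apply (coef_final a f 3 (fun _ => 0) 4 18); auto; try lra.
    intros s Hs. replace ((1 - s ^ 4) / (1 - s) * s ^ 3) with (s ^ 3 + s ^ 4 + s ^ 5 + s ^ 6) by (field; lra).
    assert (B3 := bernoulli_s s 3 ltac:(lra)). assert (B4 := bernoulli_s s 4 ltac:(lra)).
    assert (B5 := bernoulli_s s 5 ltac:(lra)). assert (B6 := bernoulli_s s 6 ltac:(lra)).
    simpl INR in B3, B4, B5, B6. lra. }
  eapply Rle_trans.
  { unfold Cminus. apply Cmod_triangle. }
  rewrite Cmod_opp, !Cmod_mult.
  assert (0 <= Cmod (a 2%nat)) by apply Cmod_ge_0.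
  assert (0 <= Cmod (a 3%nat)) by apply Cmod_ge_0.
  assert (0 <= Cmod (a 4%nat)) by apply Cmod_ge_0.
  nra.
Qed.
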